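(* Let $r$, $s$, $k$ and $n$ be positive integers with $r<k<n$ and $s+1<n$. Let $d=\gcd(s+1,n)$. If \[ k(s+1)+d-3\leq rn-1, \] then there exists an $(s,k,r)$-clash-free permutation of $\mathbb{Z}_n$.
   Context: For integers $u\leq v$, $[u,v]$ denotes the set of integers $i$ with $u\leq i\leq v$. For a subset $X\subseteq\mathbb{Z}_n$, define $||X||_n=\min\{t\in\mathbb{Z}\mid X\subseteq x+[0,t]\bmod n \text{ for some } x\in\mathbb{Z}_n\}$. For a permutation $\pi$ of $\mathbb{Z}_n$, an $(s,k,r)$-clash is a subset $X\subseteq\mathbb{Z}_n$ of cardinality $r+1$ such that $||X||_n<s$ and $||\pi(X)||_n<k$. The permutation $\pi$ is $(s,k,r)$-clash-free if it has no $(s,k,r)$-clashes. *)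

(* Defs.v *)
From mathcomp Require Import all_boot all_order all_fingroup.
Set Implicit Arguments. Unset Strict Implicit. Unset Printing Implicit Defensive.

(* Z_n is modelled by 'I_n, with element i representing the residue i mod n. *)

(* x + [0,t] mod n : the cyclic interval of length t+1 starting at x. *)
Definition cyc_interval (n : nat) (x : 'I_n) (t : nat) : pred 'I_n :=
  fun y => ((y + n - x) %% n <= t)%N.

Definition covered (n : nat) (X : {set 'I_n}) (t : nat) : Prop :=
  exists x : 'I_n, forall y, y \in X -> cyc_interval x t y.

(* ||X||_n < s, i.e. X is covered by x + [0,t] for some integer t < s.
   (Only t >= 0 matter for nonempty X, which is the only case used.) *)
Definition circ_width_lt (n : nat) (X : {set 'I_n}) (s : nat) : Prop :=
  exists t : nat, (t < s)%N /\ covered X t.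

Definition clash (n s k r : nat) (pi : {perm 'I_n}) (X : {set 'I_n}) : Prop :=
  #|X| = r.+1 /\ circ_width_lt X s /\ circ_width_lt (pi @: X) k.

Definition clash_free (n s k r : nat) (pi : {perm 'I_n}) : Prop :=
  forall X : {set 'I_n}, ~ clash s k r pi X.

(* Main.v *)
Require Import Defs.
From mathcomp Require Import all_boot all_order all_fingroup zify.

Definition E (n n' q : nat) := (n - 1 - q %% n) %/ n'.
Definition Lam (n m n' q : nat) := q * m + E n n' q.

Lemma E_lt n n' d q : 0 < n -> n = n' * d -> E n n' q < d.
Proof.
move=> n0 hn; rewrite /E ltn_divLR; last by move: n0; rewrite hn; case: (n') => // ; rewrite mul0n.
by rewrite mulnC -hn; lia.
Qed.

Lemma E_step n n' q : 0 < n -> 0 < n' -> E n n' q <= (E n n' q.+1).+1.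
Proof.
move=> n0 n'0; rewrite /E modnS.
have hq := ltn_pmod q n0.
case: ifP => hd.
  have h0 : (q %% n).+1 %% n = 0 by rewrite -addn1 modnDml addn1; apply/eqP.
  have h : (q %% n).+1 = n.
    apply/eqP; rewrite eqn_leq hq /=; apply: contraT; rewrite -ltnNge => hlt.
    by rewrite modn_small in h0.
  have -> : n - 1 - q %% n = 0 by lia.
  by rewrite div0n.
have -> : n - 1 - (q %% n).+1 = n - 1 - q %% n - 1 by lia.
set x := n - 1 - q %% n.
case: x => [|x]; first by rewrite div0n.
rewrite subn1 /=.
apply: leq_trans (leq_div2r n' (leq_addr n'.-1 x.+1)) _.
have -> : x.+1 + n'.-1 = x + 1 * n' by lia.
by rewrite divnDMl // addn1.
Qed.

Lemma Lam_step n m n' q : 0 < m -> 0 < n -> 0 < n' -> Lam n m n' q + m.-1 <= Lam n m n' q.+1.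
Proof.
move=> m0 n0 n'0; have := E_step n n' q n0 n'0; rewrite /Lam mulSn; move: (E n n' q) (E n n' q.+1) (q * m) => x y z; lia.
Qed.

Lemma Lam_mono n m n' a b : 0 < m -> 0 < n -> 0 < n' -> a <= b ->
  Lam n m n' a + (b - a) * m.-1 <= Lam n m n' b.
Proof.
move=> m0 n0 n'0 /subnKC <-; elim: (b - a) => [|j IH]; first by rewrite addn0 subnn mul0n addn0.
move: IH; rewrite !addKn => IH.
have := Lam_step n m n' (a + j) m0 n0 n'0; rewrite addnS mulSn; lia.
Qed.

Lemma Lam_up n m n' d a b : 0 < n -> n = n' * d -> a <= b ->
  Lam n m n' b <= Lam n m n' a + (b - a) * m + d.-1.
Proof.
move=> n0 hn hab; have := E_lt n n' d b n0 hn; rewrite /Lam.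
have : a * m + (b - a) * m = b * m by rewrite -mulnDl subnKC.
lia.
Qed.

Lemma Lam_mod n m n' w : 0 < n -> Lam n m n' w %% n = Lam n m n' (w %% n) %% n.
Proof.
move=> n0; rewrite /Lam /E modn_mod.
by rewrite -modnDml -[in RHS]modnDml modnMml.
Qed.

Lemma Lam_inj n m n' d p q : 0 < n -> d = gcdn m n -> n = n' * d -> p < n -> q < n ->
  Lam n m n' p %% n = Lam n m n' q %% n -> p = q.
Proof.
move=> n0 hd hn.
have d0 : 0 < d by rewrite hd gcdn_gt0 n0 orbT.
have n'0 : 0 < n' by move: n0; rewrite hn; case: (n') => //; rewrite mul0n.
have [m' hm] : exists m', m = m' * d by exists (m %/ d); rewrite divnK // hd dvdn_gcdl.
have key : forall p, p < n -> Lam n m n' p %% n = (p * m' %% n') * d + E n n' p.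
  move=> x hx; rewrite /Lam.
  have := E_lt n n' d x n0 hn; move: (E n n' x) => e he.
  rewrite -modnDml hm mulnA hn -muln_modl.
  rewrite modn_small //.
  have := ltn_pmod (x * m') n'0.
  move: (x * m' %% n') => a ha.
  nia.
wlog: p q / p <= q.
  move=> H hp hq he; case: (leqP p q) => hpq; first exact: H.
  by apply/esym/H => //; apply: ltnW.
move=> hpq hp hq; rewrite !key // => he.
have [ha hef] : p * m' %% n' = q * m' %% n' /\ E n n' p = E n n' q.
  have := ltn_pmod (p * m') n'0; have := ltn_pmod (q * m') n'0.
  have := E_lt n n' d p n0 hn; have := E_lt n n' d q n0 hn.
  move: he; move: (p * m' %% n') (E n n' p) (q * m' %% n') (E n n' q).
  move=> a e b f he hf hee ha hb.
  have hab : a = b by nia.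
  by split => //; move: he; rewrite hab; lia.
have h1 : n' %| (q - p) * m'.
  rewrite mulnBl -eqn_mod_dvd; last by rewrite leq_mul2r hpq orbT.
  by apply/eqP.
have h2 : n %| (q - p) * d.
  have -> : (q - p) * d = gcdn ((q - p) * m) ((q - p) * n) by rewrite -muln_gcdr hd.
  rewrite dvdn_gcd; apply/andP; split; last exact: dvdn_mull (dvdnn n).
  by rewrite hn hm mulnA dvdn_pmul2r.
have h3 : n' %| q - p by move: h2; rewrite hn dvdn_pmul2r.
case/dvdnP: h3 => c hc.
move: hef; rewrite /E !modn_small //.
have -> : n - 1 - p = (n - 1 - q) + c * n' by lia.
rewrite divnDMl // => hc0.
have c0 : c = 0 by lia.
move: hc; rewrite c0 mul0n; lia.
Qed.

Theorem theorem4 (r s k n : nat) :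
  (0 < r)%N -> (0 < s)%N -> (0 < k)%N -> (0 < n)%N ->
  (r < k)%N -> (k < n)%N -> (s.+1 < n)%N ->
  let d := gcdn s.+1 n in
  (k * s.+1 + d - 3 <= r * n - 1)%N ->
  exists pi : {perm 'I_n}, clash_free s k r pi.
Proof.
move=> r0 s0 k0 n0 rk kn sn d hcond.
set m := s.+1 in hcond.
set n' := n %/ d.
have hdn : d %| n := dvdn_gcdr _ _.
have hn : n = n' * d by rewrite divnK.
have d0 : 0 < d by rewrite /d gcdn_gt0 n0 orbT.
have n'0 : 0 < n' by move: n0; rewrite hn; case: (n') => //; rewrite mul0n.
have dn : d <= n := dvdn_leq n0 hdn.
pose f (p : 'I_n) : 'I_n := Ordinal (ltn_pmod (Lam n m n' p) n0).
have finj : injective f.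
  move=> p q /(congr1 val) /= h; apply/val_inj.
  exact: (Lam_inj n m n' d p q n0 erefl hn (ltn_ord p) (ltn_ord q) h).
exists (perm finj)^-1%g.
move=> X [hX [[t1 [ht1 [x hx]]] [t2 [ht2 [z hz]]]]].
set pi := (perm finj)^-1%g in hz.
set P := pi @: X in hz.
have hP : #|P| = r.+1 by rewrite card_imset //; exact: perm_inj.
have hPf : forall p, p \in P -> (f p + n - x) %% n <= t1.
  move=> p /imsetP [y hy ->].
  have -> : f (pi y) = y by rewrite -permE /pi permKV.
  exact: hx.
have hPz : forall p, p \in P -> (p + n - z) %% n <= t2.
  move=> p hp; exact: hz.
pose ip (p : 'I_n) := (p + n - z) %% n.
pose A (p : 'I_n) := Lam n m n' (z + ip p) + n - x.
pose T (p : 'I_n) := A p %/ n.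
have zip : forall p : 'I_n, (z + ip p) %% n = p.
  move=> p; rewrite /ip modnDmr.
  have -> : z + (p + n - z) = p + n by have := ltn_ord z; lia.
  by rewrite modnDr modn_small.
have hA : forall p, p \in P -> A p %% n <= s.-1.
  move=> p hp; have h := hPf p hp.
  have hxn := ltn_ord x.
  rewrite /A -addnBA; last by lia.
  rewrite -modnDml Lam_mod // zip /=.
  rewrite addnBA; last by lia.
  apply: (leq_trans h); lia.
have ipinj : forall p q, ip p = ip q -> p = q.
  by move=> p q h; apply/val_inj; rewrite /= -(zip p) h zip.
have pair : forall p q, p \in P -> q \in P -> ip p < ip q -> T p < T q < T p + r.
  move=> p q hp hq hpq.
  have hiq : ip q <= t2 := hPz q hq.
  have := hA p hp; have := hA q hq.
  have := divn_eq (A p) n; have := divn_eq (A q) n.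
  have hmono := Lam_mono n m n' (z + ip p) (z + ip q) (ltn0Sn s) n0 n'0.
  have hup := Lam_up n m n' d (z + ip p) (z + ip q) n0 hn.
  have hle : z + ip p <= z + ip q by rewrite leq_add2l ltnW.
  move: {hmono hup} (hmono hle) (hup hle).
  have hxn := ltn_ord x.
  rewrite /T /A.
  have -> : z + ip q - (z + ip p) = ip q - ip p by lia.
  have h1 : (ip q - ip p) * m.-1 >= s by rewrite /m /= leq_pmull // subn_gt0.
  have h2 : (ip q - ip p) * m <= k.-1 * m by rewrite leq_mul2r; apply/orP; right; lia.
  have h3 : k.-1 * m + m = k * m by rewrite addnC -mulSn prednK.
  move: h1 h2 h3.
  move: (ip q - ip p) => w.
  move: (Lam n m n' (z + ip p)) (Lam n m n' (z + ip q)) => Lu Lv.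
  rewrite /m /=.
  move=> h1 h2 h3 h4 h5.
  rewrite /m in hcond.
  move: ((Lu + n - x) %/ n) ((Lu + n - x) %% n) ((Lv + n - x) %/ n) ((Lv + n - x) %% n).
  move=> Tp rp Tq rq eq ep hq' hp'.
  have e1 : Tp * n < Tq * n by lia.
  have e2 : Tq * n < (Tp + r) * n by rewrite mulnDl; lia.
  by rewrite !ltn_pmul2r // in e1 e2; rewrite e1 e2.
have [p0 hp0] : exists p0, p0 \in P.
  by apply/set0Pn; rewrite -card_gt0 hP.
case: (arg_minnP ip hp0) => p1 hp1 hmin.
have hb : forall p, p \in P -> T p1 <= T p < T p1 + r.
  move=> p hp; case: (eqVneq p p1) => [->|hne]; first by rewrite leqnn /= -addn1 leq_add2l.
  have hlt : ip p1 < ip p.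
    rewrite ltn_neqAle hmin // andbT; apply/eqP => h; move/eqP: hne; apply; exact/esym/ipinj.
  by case/andP: (pair p1 p hp1 hp hlt) => h1 h2; rewrite ltnW.
pose g (p : 'I_n) : 'I_r := insubd (Ordinal r0) (T p - T p1).
have ginj : {in P &, injective g}.
  move=> p q hp hq /(congr1 val); rewrite /g !val_insubd.
  case/andP: (hb p hp) => hp1' hp2; case/andP: (hb q hq) => hq1 hq2.
  have -> : T p - T p1 < r by lia.
  have -> : T q - T p1 < r by lia.
  move=> h; have hT : T p = T q by lia.
  case: (ltngtP (ip p) (ip q)) => hc.
  - by case/andP: (pair p q hp hq hc); rewrite hT ltnn.
  - by case/andP: (pair q p hq hp hc); rewrite hT ltnn.
  - exact: ipinj.
have := max_card [set g p | p in P].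
by rewrite card_in_imset // hP card_ord ltnn.
Qed.
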